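(* Let $K(x,y)$ be a real kernel on $\{x\ne y\}\subset\mathbb R^2$ with $|K(x,y)|\le C|x-y|^{-1}$, differentiable in $x$ with $\partial_xK(x,y)\ge c\,(x-y)^{-2}$ for all $x\ne y$, for some $c>0$. Let $J$ be a bounded interval with center $c_J$, $\omega$ a positive Borel measure with $0<\omega(J)<\infty$, and $\mu$ a finite positive Borel measure whose support is disjoint from the closure of $J$; set $T\mu(x)=\int K(x,y)\,d\mu(y)$ for $x\in J$. Then $$\int_J\int_J|T\mu(x)-T\mu(z)|^2\,d\omega(x)\,d\omega(z)\ \ge\ \frac{c^2}{8}\Big(\frac{\mathrm P(J,\mu)}{|J|}\Big)^2\,\omega(J)\int_J\big|x-\mathbb E^\omega_J x\big|^2\,d\omega(x),$$ where $\mathbb E^\omega_Jx=\omega(J)^{-1}\int_Jx\,d\omega(x)$.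
   Context: $\mathrm P(J,\mu)=\int_{\mathbb R}\frac{|J|}{(|J|+\operatorname{dist}(y,J))^2}\,d\mu(y)$. *)

(* Defs.v *)
From HB Require Import structures.
From mathcomp Require Import all_boot all_order all_algebra.
From mathcomp Require Import all_classical all_reals all_analysis.
Set Implicit Arguments. Unset Strict Implicit. Unset Printing Implicit Defensive.
Import Order.TTheory GRing.Theory Num.Theory.
Import numFieldNormedType.Exports.
Local Open Scope classical_set_scope.
Local Open Scope ring_scope.

Definition msupport (R : realType) (mu : {measure set R -> \bar R}) : set R :=
  [set x | forall U : set R, open U -> U x -> (0 < mu U)%E].

Definition dist_set (R : realType) (y : R) (J : set R) : R :=
  inf [set `|y - x| | x in J].

Definition poissonP (R : realType) (J : set R) (lenJ : R)
    (mu : {measure set R -> \bar R}) : \bar R :=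
  (\int[mu]_y (lenJ / (lenJ + dist_set y J) ^+ 2)%:E)%E.

Definition Top (R : realType) (K : R -> R -> R)
    (mu : {measure set R -> \bar R}) (x : R) : R :=
  fine (\int[mu]_y (K x y)%:E)%E.

Definition EJ (R : realType) (omega : {measure set R -> \bar R}) (J : set R) : R :=
  fine (\int[omega]_(x in J) x%:E)%E / fine (omega J).

(* Main.v *)
Require Import Defs.
From HB Require Import structures.
From mathcomp Require Import all_boot all_order all_algebra.
From mathcomp Require Import all_classical all_reals all_analysis.
From mathcomp Require Import measurable_realfun.
From mathcomp Require Import ring lra.
Import Order.TTheory GRing.Theory Num.Theory.
Import numFieldNormedType.Exports.
Local Open Scope classical_set_scope.
Local Open Scope ring_scope.

Section helper_nm.
Local Open Scope ereal_scope.
Lemma le_int_nm d (T : measurableType d) (R : realType) (mu : {measure set T -> \bar R})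
  (D : set T) (f g : T -> \bar R) :
  (forall x, D x -> 0 <= f x) -> (forall x, D x -> f x <= g x) ->
  \int[mu]_(x in D) f x <= \int[mu]_(x in D) g x.
Proof.
move=> f0 fg.
have g0 : forall x, D x -> 0 <= g x by move=> x Dx; exact: le_trans (f0 x Dx) (fg x Dx).
rewrite !ge0_integralE//.
apply: ge_ereal_sup => _ [h /= hf <-].
apply: ereal_sup_ubound => /=; exists h => //= x.
apply: le_trans (hf x) _.
rewrite /patch; case: ifPn => // /set_mem Dx; exact: fg.
Qed.

End helper_nm.

Lemma bdd_int d (T : measurableType d) (R : realType) (mu : {measure set T -> \bar R})
  (A : set T) (f : T -> R) (M : R) : measurable A -> (mu A < +oo)%E ->
  measurable_fun A f -> {ae mu, forall x, A x -> `|f x| <= M} ->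
  mu.-integrable A (EFin \o f).
Proof.
move=> mA Afin mf hb; apply/integrableP; split; first exact/measurable_EFinP.
apply: le_lt_trans.
  apply: (integral_le_bound (`|M|)%:E) => //.
  - exact/measurable_EFinP.
  - apply: filterS hb => x h Ax; rewrite /= lee_fin; apply: le_trans (h Ax) _.
    exact: ler_norm.
by rewrite lte_mul_pinfty.
Qed.

Lemma measJ (R : realType) (a b : R) (J : set R) :
  `]a, b[ `<=` J -> J `<=` `[a, b] -> measurable J.
Proof.
move=> h1 h2.
have -> : J = `]a, b[ `|` (J `&` [set a]) `|` (J `&` [set b]).
  apply/seteqP; split => [x Jx|x]; last first.
    by case=> [[/h1|[]]|[]].
  have := h2 x Jx; rewrite /= in_itv /= => /andP[ax xb].
  have [xa|xa] := eqVneq x a; first by subst x; left; right.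
  have [xb2|xb2] := eqVneq x b; first by subst x; right.
  by left; left; rewrite /= in_itv /= !lt_neqAle ax xb eq_sym xa xb2.
have hA : measurable (J `&` [set a]).
  have [Ja|Ja] := pselect (J a).
    by rewrite (_ : _ `&` _ = [set a]) //; apply/seteqP; split; [by move=> ? []|by move=> ? /= ->].
  by rewrite (_ : _ `&` _ = set0) //; apply/seteqP; split; [move=> ? /= [? ?]; by subst|by []].
have hB : measurable (J `&` [set b]).
  have [Ja|Ja] := pselect (J b).
    by rewrite (_ : _ `&` _ = [set b]) //; apply/seteqP; split; [by move=> ? []|by move=> ? /= ->].
  by rewrite (_ : _ `&` _ = set0) //; apply/seteqP; split; [move=> ? /= [? ?]; by subst|by []].
have hI : measurable (`]a, b[ : set R) by exact: measurable_itv.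
have := measurableU _ _ (measurableU _ _ hI hA) hB.
exact.
Qed.
Lemma Kint (R : realType) (K : R -> R -> R) (C : R) (mu : {measure set R -> \bar R}) (x r : R) :
  measurable_fun (~` [set x]) (K x) ->
  (forall y : R, x != y -> `|K x y| <= C / `|x - y|) ->
  0 < r -> mu `](x - r), (x + r)[%classic = 0%E -> (mu setT < +oo)%E ->
  mu.-integrable setT (EFin \o K x).
Proof.
move=> mK hK r0 mu0 mufin.
have mT : measurable_fun setT (K x).
  rewrite (_ : setT = ~` [set x] `|` [set x]); last by rewrite setvU.
  apply/measurable_funU => //; first exact: measurableC.
  split => //; exact: measurable_fun_set1.
apply: (@bdd_int _ _ _ mu setT (K x) (`|C| / r)) => //.
exists `](x - r), (x + r)[%classic.
split; [exact: measurable_itv|exact: mu0|].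
move=> y /= hy; apply: contrapT => hy'; apply: hy => _.
have xy : r <= `|x - y|.
  rewrite leNgt; apply/negP => h; apply: hy'; rewrite /= in_itv /=.
  move: h; rewrite ltr_norml => /andP[h1 h2].
  apply/andP; split; lra.
have xy' : x != y by apply/eqP => e; move: xy; rewrite e subrr normr0; lra.
apply: le_trans (hK y xy') _.
apply: le_trans (_ : `|C| / `|x - y| <= _).
  by apply: ler_wpM2r; [rewrite invr_ge0|exact: ler_norm].
by apply: ler_wpM2l => //; rewrite lef_pV2 ?posrE //; lra.
Qed.

Lemma dist_formula (R : realType) (a b : R) (J : set R) : a < b ->
  `]a, b[ `<=` J -> J `<=` `[a, b] -> forall y,
  dist_set y J = (`|y - a| + `|y - b| - (b - a)) / 2.
Proof.
move=> ab h1 h2 y; rewrite /dist_set.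
set S := [set `|y - x| | x in J].
have lbS : lbound S ((`|y - a| + `|y - b| - (b - a)) / 2).
  move=> _ [x Jx <-].
  have := h2 x Jx; rewrite /= in_itv /= => /andP[ax xb].
  have h3 : `|y - a| <= `|y - x| + (x - a).
    have -> : y - a = (y - x) + (x - a) by ring.
    by apply: le_trans (ler_normD _ _) _; rewrite [`|x - a|]ger0_norm // subr_ge0.
  have h4 : `|y - b| <= `|y - x| + (b - x).
    have -> : y - b = (y - x) + (x - b) by ring.
    apply: le_trans (ler_normD _ _) _; rewrite (distrC x b) [`|b - x|]ger0_norm //.
    by rewrite subr_ge0.
  rewrite ler_pdivrMr//; lra.
have hS : has_lbound S by exists ((`|y - a| + `|y - b| - (b - a)) / 2).
apply/eqP; rewrite eq_le; apply/andP; split; last first.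
  apply: lb_le_inf => //; exists `|y - (a + b) / 2|, ((a + b) / 2) => //.
  by apply: h1; rewrite /= in_itv /=; apply/andP; split; lra.
apply/ler_addgt0Pr => e e0.
pose m := Num.min e ((b - a) / 2).
have m0 : 0 < m by rewrite lt_min e0 /=; lra.
have me : m <= e by rewrite ge_min lexx.
have mL : m <= (b - a) / 2 by rewrite ge_min lexx orbT.
have [ya|ay] := leP y a.
  have Sx : S `|y - (a + m)| by exists (a + m) => //; apply: h1; rewrite /= in_itv /=; apply/andP; split; lra.
  apply: le_trans (ge_inf hS Sx) _.
  rewrite [`|y - (a + m)|]ler0_norm; rewrite ?[`|y - a|]ler0_norm ?[`|y - b|]ler0_norm; lra.
have [yb|by_] := leP b y.
  have Sx : S `|y - (b - m)| by exists (b - m) => //; apply: h1; rewrite /= in_itv /=; apply/andP; split; lra.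
  apply: le_trans (ge_inf hS Sx) _.
  rewrite [`|y - (b - m)|]ger0_norm; rewrite ?[`|y - a|]ger0_norm ?[`|y - b|]ger0_norm; lra.
have Sx : S `|y - y| by exists y => //; apply: h1; rewrite /= in_itv /=; apply/andP; split; lra.
apply: le_trans (ge_inf hS Sx) _.
rewrite subrr normr0 [`|y - a|]ger0_norm; rewrite ?[`|y - b|]ler0_norm; lra.
Qed.

Lemma gP_meas (R : realType) (a b : R) : a < b ->
  measurable_fun setT (fun y : R => (b - a) / ((b - a) + (`|y - a| + `|y - b| - (b - a)) / 2) ^+ 2).
Proof.
move=> ab; apply: continuous_measurable_fun => y.
have hs : forall t : R, (b - a) + (`|t - a| + `|t - b| - (b - a)) / 2 != 0.
  move=> t; apply/lt0r_neq0.
  have := normr_ge0 (t - a); have := normr_ge0 (t - b).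
  have : b - a <= `|t - a| + `|t - b|.
    have -> : b - a = (t - a) - (t - b) by ring.
    exact: le_trans (ler_norm _) (ler_normB _ _).
  lra.
apply: cvgM; first exact: cvg_cst.
apply: cvgV; first by rewrite expf_neq0.
assert (hcv : (fun t : R => (b - a) + (`|t - a| + `|t - b| - (b - a)) / 2) @ y -->
   (b - a) + (`|y - a| + `|y - b| - (b - a)) / 2).
  apply: cvgD; first exact: cvg_cst.
  apply: cvgM; last exact: cvg_cst.
  apply: cvgB; last exact: cvg_cst.
  apply: cvgD; apply: cvg_norm; apply: cvgB; (exact: cvg_id || exact: cvg_cst).
exact: (cvgM hcv hcv).
Qed.

Lemma mvt_bound (R : realType) (K : R -> R -> R) (c a b x z y : R)
  (hKder : forall x y : R, x != y -> derivable (fun t => K t y) x 1)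
  (hKmono : forall x y : R, x != y ->
     c / (x - y) ^+ 2 <= derive1 (fun t => K t y) x) :
  0 < c -> a <= z -> z < x -> x <= b -> ~ `[a, b]%classic y ->
  c * (x - z) / ((b - a) + (`|y - a| + `|y - b| - (b - a)) / 2) ^+ 2 <= K x y - K z y.
Proof.
move=> c0 az zx xb yab.
have yo : forall t, a <= t <= b -> t != y.
  move=> t tab; apply/eqP => ty; apply: yab; subst t; by rewrite /= in_itv.
have hd : forall t, t \in `]z, x[ -> is_derive t 1 (fun t => K t y) ('D_1 (fun t => K t y) t).
  move=> t; rewrite in_itv /= => /andP[zt tx]; apply: derivableP; apply: hKder.
  apply: yo; apply/andP; split; lra.
have hcont : {within `[z, x], continuous (fun t => K t y)}.
  apply: derivable_within_continuous => t; rewrite in_itv /= => /andP[zt tx].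
  apply: hKder; apply: yo; apply/andP; split; lra.
have [xi xiin ->] := MVT zx hd hcont.
move: xiin; rewrite in_itv /= => /andP[zxi xix].
have hm := hKmono xi y (yo xi ltac:(apply/andP; split; lra)).
rewrite -derive1E in hm *.
set D := (b - a) + _.
have hyab : y < a \/ b < y.
  have [ya|ay] := ltP y a; first by left.
  have [by_|yb] := ltP b y; first by right.
  by exfalso; apply: yab; rewrite /= in_itv /= ay yb.
have hxi : 0 < `|xi - y| <= D.
  rewrite normr_gt0 subr_eq0 (yo xi ltac:(apply/andP; split; lra)) /= /D.
  case: hyab => hy.
    rewrite ger0_norm ?subr_ge0 ?[`|y - a|]ler0_norm ?[`|y - b|]ler0_norm; lra.
  rewrite ler0_norm ?subr_le0 ?[`|y - a|]ger0_norm ?[`|y - b|]ger0_norm; lra.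
move/andP: hxi => [h0 h1].
have hsq : (xi - y) ^+ 2 <= D ^+ 2.
  rewrite -[(xi - y) ^+ 2](real_normK (num_real _)); rewrite ler_pXn2r // ?nnegrE //; lra.
have hsq0 : 0 < (xi - y) ^+ 2 by rewrite -(real_normK (num_real _)) exprn_gt0.
have : c / D ^+ 2 <= c / (xi - y) ^+ 2.
  rewrite ler_pM2l // lef_pV2 ?posrE //; lra.
move=> h2; have h3 := le_trans h2 hm.
rewrite mulrAC (mulrC _ (x - z)) [X in _ <= X]mulrC.
by apply: ler_wpM2l => //; lra.
Qed.

Lemma null_nbhd (R : realType) (mu : {measure set R -> \bar R}) (t : R) :
  ~ msupport mu t -> exists2 r : R, 0 < r & mu `](t - r), (t + r)[%classic = 0%E.
Proof.
move=> /existsNP [U /not_implyP [oU /not_implyP [Ut /negP]]].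
rewrite -leNgt => muU.
have : nbhs t U by exact: open_nbhs_nbhs.
move=> /nbhs_ballP [r /= r0 hr]; exists r => //.
apply/eqP; rewrite eq_le measure_ge0 andbT.
apply: le_trans muU; apply: le_measure; rewrite ?inE.
- exact: measurable_itv.
- exact: open_measurable.
- by move=> y hy; apply: hr; rewrite ball_itv.
Qed.

Lemma null_seg (R : realType) (mu : {measure set R -> \bar R}) (a b : R) :
  (forall t, `[a, b]%classic t -> ~ msupport mu t) -> mu.-negligible `[a, b]%classic.
Proof.
move=> hs.
have H : forall t, exists r : R, `[a, b]%classic t -> 0 < r /\ mu `](t - r), (t + r)[%classic = 0%E.
  move=> t; have [tab|tab] := pselect (`[a, b]%classic t).
    by have [r r0 hr] := @null_nbhd R mu t (hs t tab); exists r.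
  by exists 1.
have [r hr] := choice H.
have := @segment_compact R a b; rewrite compact_cover => /(_ R `[a, b]%classic (fun t => `](t - r t), (t + r t)[%classic)).
case.
- by move=> i _; exact: interval_open.
- move=> t tab; exists t => //; have [r0 _] := hr t tab.
  rewrite /= in_itv /=; apply/andP; split; lra.
move=> D' sub cov.
suff : mu.-negligible [set x | exists2 i, i \in (finmap.enum_fset D') & `](i - r i), (i + r i)[%classic x].
  apply: negligibleS => x /cov [i /= iD xi]; by exists i.
have : forall i, i \in (finmap.enum_fset D') -> `[a, b]%classic i.
  by move=> i iD; have /set_mem := sub i iD.
elim: (finmap.enum_fset D') => [_|i s IH hs'].
  by rewrite (_ : [set x | _] = set0); [exact: negligible_set0|apply/seteqP; split => // x [? ]].
rewrite (_ : [set x | _] = `](i - r i), (i + r i)[%classic `|` [set x | exists2 i, i \in s & `](i - r i), (i + r i)[%classic x]).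
  apply: negligibleU.
    apply/negligibleP; first exact: measurable_itv.
    by have [] := hr i (hs' i (mem_head _ _)).
  by apply: IH => j js; apply: hs'; rewrite in_cons js orbT.
apply/seteqP; split => x.
  move=> [j]; rewrite in_cons => /orP[/eqP ->|js] xj; first by left.
  by right; exists j.
case=> [xi|[j js xj]]; first by exists i => //; exact: mem_head.
by exists j => //; rewrite in_cons js orbT.
Qed.

Lemma poly_int (R : realType) (om : {measure set R -> \bar R}) (J : set R) (a b : R) :
  measurable J -> J `<=` `[a, b]%classic -> (om J < +oo)%E ->
  forall al be ga : R,
  (\int[om]_(x in J) (al + be * x + ga * x ^+ 2)%:E =
   (al * fine (om J) + be * fine (\int[om]_(x in J) x%:E)
      + ga * fine (\int[om]_(x in J) (x ^+ 2)%:E))%:E)%E.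
Proof.
move=> mJ hJ omfin al be ga.
set B := `|a| + `|b|.
have hB : forall x, J x -> `|x| <= B.
  move=> x /hJ; rewrite /= in_itv /= => /andP[ax xb].
  rewrite /B; have := normr_ge0 a; have := normr_ge0 b.
  have := ler_norm a; have := ler_norm b; have := ler_norm (- a); have := ler_norm (- b).
  rewrite !normrN ler_norml => *; apply/andP; split; lra.
have i0 : om.-integrable J (EFin \o (fun x : R => 1)).
  apply: (@bdd_int _ _ _ om J (fun=> 1) 1) => //.
  by apply: aeW => x _; rewrite normr1.
have i1 : om.-integrable J (EFin \o (fun x : R => x)).
  apply: (@bdd_int _ _ _ om J (fun x => x) B) => //.
  by apply: aeW => x Jx; exact: hB.
have i2 : om.-integrable J (EFin \o (fun x : R => x ^+ 2)).
  apply: (@bdd_int _ _ _ om J (fun x => x ^+ 2) (B ^+ 2)) => //.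
  apply: aeW => x Jx; rewrite normrX; apply: lerXn2r; rewrite ?nnegrE //.
    by apply: le_trans (normr_ge0 x) (hB x Jx).
  exact: hB.
have f1 := integrable_fin_num mJ i1.
have f2 := integrable_fin_num mJ i2.
have f0 : om J \is a fin_num by rewrite ge0_fin_numE // measure_ge0.
under eq_integral do rewrite 2!EFinD 2!EFinM.
rewrite integralD //; last exact: integrableZl.
  rewrite integralD //; last exact: integrableZl.
    rewrite !integralZl // -[al%:E]mule1 -EFinM.
    have -> : (\int[om]_(x in J) (al%:E * 1%:E))%E = (al%:E * om J)%E.
      by rewrite integralZl // integral_cst // mul1e.
    by rewrite -(fineK f0) -(fineK f1) -(fineK f2) -!EFinM -!EFinD.
  rewrite -[al%:E]mule1; exact: integrableZl.
apply: integrableD => //; last exact: integrableZl.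
rewrite -[al%:E]mule1; exact: integrableZl.
Qed.

Lemma seg_closure (R : realType) (a b : R) (J : set R) : a < b ->
  `]a, b[%classic `<=` J -> `[a, b]%classic `<=` closure J.
Proof.
move=> ab hJ t; rewrite /= in_itv /= => /andP[at_ tb] B /nbhs_ballP [e /= e0 hB].
have [tb'|tb'] := ltP t b.
  set m := Num.min e (b - t).
  have m1 : m <= e by rewrite /m ge_min lexx.
  have m2 : m <= b - t by rewrite /m ge_min lexx orbT.
  have m0 : 0 < m by rewrite /m lt_min e0 subr_gt0.
  exists (t + m / 2); split.
    by apply: hJ; rewrite /= in_itv /=; apply/andP; split; lra.
  apply: hB; rewrite ball_itv /= in_itv /=; apply/andP; split; lra.
set m := Num.min e (b - a).
have m1 : m <= e by rewrite /m ge_min lexx.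
have m2 : m <= b - a by rewrite /m ge_min lexx orbT.
have m0 : 0 < m by rewrite /m lt_min e0 subr_gt0.
exists (t - m / 2); split.
  by apply: hJ; rewrite /= in_itv /=; apply/andP; split; lra.
apply: hB; rewrite ball_itv /= in_itv /=; apply/andP; split; lra.
Qed.


Theorem mainTheorem11 (R : realType) (K : R -> R -> R) (C c : R)
  (hKmeas : forall x : R, measurable_fun (~` [set x]) (K x))
  (hKsize : forall x y : R, x != y -> `|K x y| <= C / `|x - y|)
  (hKder : forall x y : R, x != y -> derivable (fun t => K t y) x 1)
  (hc : 0 < c)
  (hKmono : forall x y : R, x != y ->
     c / (x - y) ^+ 2 <= derive1 (fun t => K t y) x)
  (a b : R) (hab : a < b) (J : set R)
  (hJl : `]a, b[ `<=` J) (hJr : J `<=` `[a, b])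
  (omega : {measure set R -> \bar R})
  (homJ0 : (0 < omega J)%E) (homJfin : (omega J < +oo)%E)
  (mu : {measure set R -> \bar R}) (hmufin : (mu setT < +oo)%E)
  (hsupp : msupport mu `&` closure J = set0) :
  let lenJ := b - a in
  let P := fine (poissonP J lenJ mu) in
  (\int[omega]_(x in J) \int[omega]_(z in J)
      ((Top K mu x - Top K mu z) ^+ 2)%:E
   >= ((c ^+ 2 / 8) * (P / lenJ) ^+ 2)%:E * omega J *
      \int[omega]_(x in J) ((x - EJ omega J) ^+ 2)%:E)%E.
Proof.
cbv zeta.
set lenJ := b - a.
set P := fine (poissonP J lenJ mu).
have hL : 0 < lenJ by rewrite /lenJ subr_gt0.
have mJ : measurable J := @measJ R a b J hJl hJr.
pose dd y := (`|y - a| + `|y - b| - (b - a)) / 2.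
have dd0 : forall y, 0 <= dd y.
  move=> y; rewrite /dd divr_ge0 // subr_ge0.
  have -> : b - a = (y - a) - (y - b) by ring.
  exact: le_trans (ler_norm _) (ler_normB _ _).
pose gP y := (b - a) / ((b - a) + dd y) ^+ 2.
have gPb : forall y, 0 <= gP y <= lenJ^-1.
  move=> y; have hs : lenJ <= (b - a) + dd y by rewrite /lenJ; have := dd0 y; lra.
  rewrite /gP divr_ge0 ?exprn_ge0 /=; try lra.
  apply: (@le_trans _ _ (lenJ / lenJ ^+ 2)).
    rewrite ler_wpM2l ?lef_pV2 ?posrE ?exprn_gt0 //; try lra.
    by rewrite ler_pXn2r ?nnegrE //; lra.
  by rewrite expr2 invfM mulrA divff ?mul1r // gt_eqF.
have gint : mu.-integrable setT (EFin \o gP).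
  apply: (@bdd_int _ _ _ mu setT gP lenJ^-1) => //.
    exact: (@gP_meas R a b hab).
  apply: aeW => y _; have /andP[g0 g1] := gPb y; by rewrite ger0_norm.
have PEE : poissonP J lenJ mu = (\int[mu]_y (gP y)%:E)%E.
  by apply: eq_integral => y _; rewrite (@dist_formula R a b J hab hJl hJr).
have PEfin : poissonP J lenJ mu \is a fin_num by rewrite PEE; exact: integrable_fin_num.
have P0 : 0 <= P.
  apply: fine_ge0; rewrite PEE; apply: integral_ge0 => y _; rewrite lee_fin.
  by have /andP[] := gPb y.
have notsupp : forall t, closure J t -> ~ msupport mu t.
  move=> t ct st; have : (msupport mu `&` closure J) t by [].
  by rewrite hsupp.
have nab : mu.-negligible `[a, b]%classic.
  apply: null_seg => t tab; apply: notsupp; exact: (@seg_closure R a b J hab hJl).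
have mab : measurable (`[a, b]%classic : set R) by exact: measurable_itv.
have mu_ab : mu `[a, b]%classic = 0%E by apply/negligibleP.
have Kix : forall x, J x -> mu.-integrable setT (EFin \o K x).
  move=> x Jx; have [r r0 hr] := @null_nbhd R mu x (notsupp x (subset_closure Jx)).
  exact: (@Kint R K C mu x r (hKmeas x) (hKsize x) r0 hr hmufin).
have PE_E : poissonP J lenJ mu = (P%:E)%E by rewrite /P fineK.
set kk := c * P / lenJ.
have kk0 : 0 <= kk by rewrite /kk divr_ge0 ?mulr_ge0 //; lra.
have core : forall x z, J x -> J z -> z < x -> kk * (x - z) <= Top K mu x - Top K mu z.
  move=> x z Jx Jz zx.
  have ix := Kix x Jx; have iz := Kix z Jz.
  have fx := integrable_fin_num measurableT ix.
  have fz := integrable_fin_num measurableT iz.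
  rewrite /Top -lee_fin EFinB !fineK //.
  rewrite -(@integralB_EFin _ _ _ mu setT (K x) (K z) measurableT ix iz).
  have -> : ((kk * (x - z))%:E = \int[mu]_y ((c * (x - z) / lenJ)%:E * (gP y)%:E))%E.
    rewrite integralZl //= -PEE PE_E -EFinM /kk; congr (_%:E).
    by field; lra.
  have mD : measurable (setT `\` `[a, b]%classic : set R) by exact: measurableD.
  have i1 : mu.-integrable setT (fun y => ((c * (x - z) / lenJ)%:E * (gP y)%:E)%E).
    exact: integrableZl.
  have i2 : mu.-integrable setT (fun y => ((K x y)%:E - (K z y)%:E)%E).
    exact: integrableB.
  rewrite (negligible_integral mab measurableT i1 mu_ab).
  rewrite [leRHS](negligible_integral mab measurableT i2 mu_ab).
  apply: le_integral => //.
  - exact: (integrableS measurableT).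
  - exact: (integrableS measurableT).
  move=> y; rewrite inE /= => -[_ yab]; rewrite -EFinM -EFinB lee_fin.
  have := hJr x Jx; have := hJr z Jz; rewrite /= !in_itv /= => /andP[az zb] /andP[ax xb].
  have := @mvt_bound R K c a b x z y hKder hKmono hc az zx xb yab.
  apply: le_trans; rewrite /gP /dd /lenJ le_eqVlt; apply/orP; left; apply/eqP.
  have : 0 < b - a + (`|y - a| + `|y - b| - (b - a)) / 2 by have := dd0 y; rewrite /dd; lra.
  move=> h.
  field.
  by apply/andP; split; apply: lt0r_neq0; lra.
have sq : forall x z, J x -> J z ->
    (kk * (x - z)) ^+ 2 <= (Top K mu x - Top K mu z) ^+ 2.
  move=> x z Jx Jz; case: (ltgtP z x) => [zx|xz|->].
  - have h := core x z Jx Jz zx.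
    rewrite ler_pXn2r ?nnegrE //; [by rewrite mulr_ge0 // subr_ge0 ltW|].
    apply: le_trans h; by rewrite mulr_ge0 // subr_ge0 ltW.
  - have h := core z x Jz Jx xz.
    have -> : (kk * (x - z)) ^+ 2 = (kk * (z - x)) ^+ 2 by ring.
    have -> : (Top K mu x - Top K mu z) ^+ 2 = (Top K mu z - Top K mu x) ^+ 2 by ring.
    rewrite ler_pXn2r ?nnegrE //; [by rewrite mulr_ge0 // subr_ge0 ltW|].
    apply: le_trans h; by rewrite mulr_ge0 // subr_ge0 ltW.
  - by rewrite !subrr mulr0 expr2 mulr0.
have step1 : (\int[omega]_(x in J) \int[omega]_(z in J) ((kk * (x - z)) ^+ 2)%:E <=
  \int[omega]_(x in J) \int[omega]_(z in J) ((Top K mu x - Top K mu z) ^+ 2)%:E)%E.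
  apply: le_int_nm.
    by move=> x _; apply: integral_ge0 => z _; rewrite lee_fin sqr_ge0.
  move=> x Jx; apply: le_int_nm.
    by move=> z _; rewrite lee_fin sqr_ge0.
  by move=> z Jz; rewrite lee_fin sq.
apply: le_trans step1.
set m0 := fine (omega J).
set m1 := fine (\int[omega]_(x in J) x%:E)%E.
set m2 := fine (\int[omega]_(x in J) (x ^+ 2)%:E)%E.
have PI := @poly_int R omega J a b mJ hJr homJfin.
have inner : forall x, (\int[omega]_(z in J) ((kk * (x - z)) ^+ 2)%:E =
    ((kk ^+ 2 * x ^+ 2) * m0 + (-2 * kk ^+ 2 * x) * m1 + kk ^+ 2 * m2)%:E)%E.
  move=> x; rewrite -PI; apply: eq_integral => z _; congr (_%:E); ring.
have -> : (\int[omega]_(x in J) \int[omega]_(z in J) ((kk * (x - z)) ^+ 2)%:E =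
    \int[omega]_(x in J)
    ((kk ^+ 2 * x ^+ 2) * m0 + (-2 * kk ^+ 2 * x) * m1 + kk ^+ 2 * m2)%:E)%E.
  by apply: eq_integral => x _; exact: inner.
have outer : (\int[omega]_(x in J)
    ((kk ^+ 2 * x ^+ 2) * m0 + (-2 * kk ^+ 2 * x) * m1 + kk ^+ 2 * m2)%:E =
    ((kk ^+ 2 * m2) * m0 + (-2 * kk ^+ 2 * m1) * m1 + (kk ^+ 2 * m0) * m2)%:E)%E.
  rewrite -PI; apply: eq_integral => x _; congr (_%:E); ring.
rewrite outer.
have EE : EJ omega J = m1 / m0 by [].
have var : (\int[omega]_(x in J) ((x - EJ omega J) ^+ 2)%:E =
    ((m1 / m0) ^+ 2 * m0 + (-2 * (m1 / m0)) * m1 + 1 * m2)%:E)%E.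
  rewrite -PI EE; apply: eq_integral => x _; congr (_%:E); ring.
have V0 : 0 <= (m1 / m0) ^+ 2 * m0 + (-2 * (m1 / m0)) * m1 + 1 * m2.
  rewrite -lee_fin -var; apply: integral_ge0 => x _; by rewrite lee_fin sqr_ge0.
rewrite var.
have om0 : omega J = m0%:E by rewrite /m0 fineK // ge0_fin_numE // measure_ge0.
have m0p : 0 < m0 by rewrite -lte_fin -om0.
rewrite om0 -!EFinM lee_fin.
set V := (m1 / m0) ^+ 2 * m0 + (-2 * (m1 / m0)) * m1 + 1 * m2 in V0 *.
have eR : (kk ^+ 2 * m2) * m0 + (-2 * kk ^+ 2 * m1) * m1 + (kk ^+ 2 * m0) * m2
    = 2 * kk ^+ 2 * (m0 * V).
  rewrite /V; field; exact: lt0r_neq0.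
have eL : c ^+ 2 / 8 * (P / lenJ) ^+ 2 * m0 * V = kk ^+ 2 / 8 * (m0 * V).
  rewrite /kk; field; exact: lt0r_neq0.
rewrite eR eL.
have W0 : 0 <= kk ^+ 2 * (m0 * V) by rewrite mulr_ge0 ?sqr_ge0 // mulr_ge0 // ltW.
rewrite mulrA (mulrC _ 8^-1) -mulrA -mulrA; lra.
Qed.
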